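(* Let $(M,\varphi,\xi,\eta,g)$ be a $5$-dimensional almost contact B-metric manifold with a natural connection $D$ whose curvature tensor $K$ is of $\varphi$-Kähler type. Then $$K=\nu L_1+\nu^* L_2,$$ where, at each point $p$, $\nu=\nu(p)(K)$ and $\nu^*=\nu^*(p)(K)=\nu(p)(K^* )$ are the sectional curvatures with respect to $K$ of the non-degenerate totally real $2$-planes in $T_pM$ orthogonal to $\xi$, i.e. for every such $2$-plane $\alpha$, $k(\alpha;p)(K)=\nu(p)$ and $k^*(\alpha;p)(K)=\nu^*(p)$. In particular, $M$ has point-wise constant sectional curvatures of the totally real $2$-planes orthogonal to $\xi$ with respect to $K$.
   Context: An almost contact B-metric manifold $(M,\varphi,\xi,\eta,g)$ is a $(2n+1)$-dimensional manifold with a $(1,1)$-tensor $\varphi$, a vector field $\xi$, a $1$-form $\eta$ and a pseudo-Riemannian metric $g$ of signature $(n,n+1)$ such that $\varphi\xi=0$, $\varphi^2=-\mathrm{Id}+\eta\otimes\xi$, $\eta\circ\varphi=0$, $\eta(\xi)=1$, and $g(x,y)=-g(\varphi x,\varphi y)+\eta(x)\eta(y)$. A natural connection is a linear connection $D$ with $D\varphi=D\xi=D\eta=Dg=0$; its curvature is $K(x,y)=[D_x,D_y]-D_{[x,y]}$ and $K(x,y,z,w)=g(K(x,y)z,w)$. A $(0,4)$-tensor $L$ is curvature-like if $L(x,y,z,w)=-L(y,x,z,w)=-L(x,y,w,z)$ and $L(x,y,z,w)+L(y,z,x,w)+L(z,x,y,w)=0$; it is of $\varphi$-Kähler type if additionally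 $L(x,y,\varphi z,\varphi w)=-L(x,y,z,w)$. Associated tensor: $L^*(x,y,z,w)=L(x,y,z,\varphi w)$. Define $\pi_1(x,y,z,w)=g(y,z)g(x,w)-g(x,z)g(y,w)$, $\pi_2(x,y,z,w)=g(y,\varphi z)g(x,\varphi w)-g(x,\varphi z)g(y,\varphi w)$, $\pi_3(x,y,z,w)=-g(y,z)g(x,\varphi w)-g(y,\varphi z)g(x,w)+g(x,z)g(y,\varphi w)+g(x,\varphi z)g(y,w)$, $\pi_4(x,y,z,w)=\eta(y)\eta(z)g(x,w)+\eta(x)\eta(w)g(y,z)-\eta(x)\eta(z)g(y,w)-\eta(y)\eta(w)g(x,z)$, $\pi_5(x,y,z,w)=\eta(y)\eta(z)g(x,\varphi w)+\eta(x)\eta(w)g(y,\varphi z)-\eta(x)\eta(z)g(y,\varphi w)-\eta(y)\eta(w)g(x,\varphi z)$, $L_1=\pi_1-\pi_2-\pi_4$, $L_2=\pi_3+\pi_5$. A $2$-plane $\alpha\subset T_pM$ is non-degenerate if $g|_\alpha$ is non-degenerate, totally real if $\alpha\perp\varphi\alpha$, orthogonal to $\xi$ if $\alpha\perp\xi$. For a basis $\{x,y\}$ of such $\alpha$: $k(\alpha;p)(K)=K(x,y,y,x)/\pi_1(x,y,y,x)$, $k^*(\alpha;p)(K)=K(x,y,y,\varphi x)/\pi_1(x,y,y,x)$. *)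

(* Defs.v *)
From HB Require Import structures.
From mathcomp Require Import all_boot all_order all_algebra.
From mathcomp Require Import reals.
Set Implicit Arguments. Unset Strict Implicit. Unset Printing Implicit Defensive.
Import Order.TTheory GRing.Theory Num.Theory.
Local Open Scope ring_scope.

(* Model of a tangent space of a 5-dimensional manifold (2n+1, n = 2). *)
Notation vec R := 'cV[R]_5.

Definition bil {R : realType} (G : 'M[R]_5) (x y : vec R) : R :=
  (x^T *m G *m y) 0 0.

Definition form {R : realType} (e : 'rV[R]_5) (x : vec R) : R := (e *m x) 0 0.

(* (phi, xi, eta, g) is an almost contact B-metric structure on R^5:
   phi = F, xi, eta = e, g = G ; g symmetric of signature (n, n+1) = (2, 3). *)
Definition acBmetric {R : realType} (F : 'M[R]_5) (xi : vec R)
  (e : 'rV[R]_5) (G : 'M[R]_5) : Prop :=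
  [/\ F *m xi = 0,
      F *m F = - 1%:M + xi *m e,
      e *m F = 0
    & form e xi = 1] /\
  [/\ G^T = G,
      (exists2 P : 'M[R]_5, P \in unitmx &
         P^T *m G *m P = diag_mx (\row_(i < 5) (if (i < 2)%N then -1 else 1)))
    & forall x y, bil G x y = - bil G (F *m x) (F *m y) + form e x * form e y].

Definition tensor4 (R : realType) := vec R -> vec R -> vec R -> vec R -> R.

Definition multilinear4 {R : realType} (K : tensor4 R) : Prop :=
  [/\ (forall a x x' y z w, K (a *: x + x') y z w = a * K x y z w + K x' y z w),
      (forall a x y y' z w, K x (a *: y + y') z w = a * K x y z w + K x y' z w),
      (forall a x y z z' w, K x y (a *: z + z') w = a * K x y z w + K x y z' w)
    & (forall a x y z w w', K x y z (a *: w + w') = a * K x y z w + K x y z w')].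

Definition curvature_like {R : realType} (L : tensor4 R) : Prop :=
  [/\ (forall x y z w, L x y z w = - L y x z w),
      (forall x y z w, L x y z w = - L x y w z)
    & (forall x y z w, L x y z w + L y z x w + L z x y w = 0)].

Definition phi_Kaehler_type {R : realType} (F : 'M[R]_5) (L : tensor4 R) : Prop :=
  curvature_like L /\
  (forall x y z w, L x y (F *m z) (F *m w) = - L x y z w).

Section Pis.
Context {R : realType} (F : 'M[R]_5) (xi : vec R) (e : 'rV[R]_5) (G : 'M[R]_5).
Local Notation g := (bil G).
Local Notation eta := (form e).

Definition pi1 : tensor4 R := fun x y z w =>
  g y z * g x w - g x z * g y w.
Definition pi2 : tensor4 R := fun x y z w =>
  g y (F *m z) * g x (F *m w) - g x (F *m z) * g y (F *m w).
Definition pi3 : tensor4 R := fun x y z w =>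
  - g y z * g x (F *m w) - g y (F *m z) * g x w
  + g x z * g y (F *m w) + g x (F *m z) * g y w.
Definition pi4 : tensor4 R := fun x y z w =>
  eta y * eta z * g x w + eta x * eta w * g y z
  - eta x * eta z * g y w - eta y * eta w * g x z.
Definition pi5 : tensor4 R := fun x y z w =>
  eta y * eta z * g x (F *m w) + eta x * eta w * g y (F *m z)
  - eta x * eta z * g y (F *m w) - eta y * eta w * g x (F *m z).

Definition L1 : tensor4 R := fun x y z w => pi1 x y z w - pi2 x y z w - pi4 x y z w.
Definition L2 : tensor4 R := fun x y z w => pi3 x y z w + pi5 x y z w.

Definition nondegenerate_plane (a : {vspace vec R}) : Prop :=
  forall u, u \in a -> (forall v, v \in a -> g u v = 0) -> u = 0.
Definition totally_real_plane (a : {vspace vec R}) : Prop :=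
  forall u v, u \in a -> v \in a -> g u (F *m v) = 0.
Definition orth_xi_plane (a : {vspace vec R}) : Prop :=
  forall u, u \in a -> g u xi = 0.

(* sectional curvatures k(alpha)(K) and k*(alpha)(K) computed in a basis {x,y} *)
Definition sec_k (K : tensor4 R) (x y : vec R) : R := K x y y x / pi1 x y y x.
Definition sec_kstar (K : tensor4 R) (x y : vec R) : R :=
  K x y y (F *m x) / pi1 x y y x.
End Pis.

(* Main.v *)
Require Import Defs.
From HB Require Import structures.
From mathcomp Require Import all_boot all_order all_algebra.
From mathcomp Require Import reals.
From mathcomp Require Import ring lra zify.
From Stdlib Require Import Classical.
Import Order.TTheory GRing.Theory Num.Theory.
Local Open Scope ring_scope.
Set Implicit Arguments. Unset Strict Implicit.


Lemma bilDl (R : realType) (G : 'M[R]_5) x x' y :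
  bil G (x + x') y = bil G x y + bil G x' y.
Proof. by rewrite /bil linearD /= !mulmxDl mxE. Qed.
Lemma bilZl (R : realType) (G : 'M[R]_5) a x y :
  bil G (a *: x) y = a * bil G x y.
Proof. by rewrite /bil linearZ /= -!scalemxAl mxE. Qed.
Lemma bilDr (R : realType) (G : 'M[R]_5) x y y' :
  bil G x (y + y') = bil G x y + bil G x y'.
Proof. by rewrite /bil !mulmxDr mxE. Qed.
Lemma bilZr (R : realType) (G : 'M[R]_5) a x y :
  bil G x (a *: y) = a * bil G x y.
Proof. by rewrite /bil -!scalemxAr mxE. Qed.
Lemma etaD (R : realType) (e : 'rV[R]_5) x x' :
  Defs.form e (x + x') = Defs.form e x + Defs.form e x'.
Proof. by rewrite /Defs.form mulmxDr mxE. Qed.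
Lemma etaZ (R : realType) (e : 'rV[R]_5) a x :
  Defs.form e (a *: x) = a * Defs.form e x.
Proof. by rewrite /Defs.form -scalemxAr mxE. Qed.
Lemma bil0r (R : realType) (G : 'M[R]_5) x : bil G x 0 = 0.
Proof. by rewrite /bil mulmx0 mxE. Qed.
Lemma bil0l (R : realType) (G : 'M[R]_5) x : bil G 0 x = 0.
Proof. by rewrite /bil linear0 !mul0mx mxE. Qed.


Section S.
Lemma acFxi (R : realType) F (xi : 'cV[R]_5) e G : acBmetric F xi e G -> F *m xi = 0.
Proof. by case=> [[]]. Qed.
Lemma acFF (R : realType) F (xi : 'cV[R]_5) e G : acBmetric F xi e G ->
  forall v, F *m (F *m v) = - v + Defs.form e v *: xi.
Proof.
case=> [[_ h _ _] _] v; rewrite mulmxA h mulmxDl mulNmx mul1mx -mulmxA.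
by rewrite [e *m v]mx11_scalar mul_mx_scalar.
Qed.
Lemma acetaF (R : realType) F (xi : 'cV[R]_5) e G : acBmetric F xi e G ->
  forall v, Defs.form e (F *m v) = 0.
Proof. by case=> [[_ _ h _] _] v; rewrite /Defs.form mulmxA h mul0mx mxE. Qed.
Lemma acetaxi (R : realType) F (xi : 'cV[R]_5) e G : acBmetric F xi e G ->
  Defs.form e xi = 1.
Proof. by case=> [[_ _ _ h] _]. Qed.
Lemma acgsym (R : realType) F (xi : 'cV[R]_5) e G : acBmetric F xi e G ->
  forall x y, bil G x y = bil G y x.
Proof.
case=> [_ [h _ _]] x y; rewrite /bil.
transitivity ((x^T *m G *m y)^T 0 0); first by rewrite [RHS]mxE.
by rewrite !trmx_mul trmxK h mulmxA.
Qed.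
Lemma accompat (R : realType) F (xi : 'cV[R]_5) e G : acBmetric F xi e G ->
  forall x y, bil G x y = - bil G (F *m x) (F *m y) + Defs.form e x * Defs.form e y.
Proof. by case=> [_ [_ _ h]]. Qed.
Lemma acgxi (R : realType) F (xi : 'cV[R]_5) e G : acBmetric F xi e G ->
  forall x, bil G x xi = Defs.form e x.
Proof.
move=> H x; rewrite (accompat H) (acFxi H) bil0r (acetaxi H); ring.
Qed.
Lemma acgFl (R : realType) F (xi : 'cV[R]_5) e G : acBmetric F xi e G ->
  forall x y, bil G (F *m x) y = bil G x (F *m y).
Proof.
move=> H x y; rewrite (accompat H) (acFF H) bilDl bilZl (acetaF H).
rewrite (acgsym H xi) (acgxi H) (acetaF H) -(scaleN1r x) bilZl; ring.
Qed.
Lemma acgFsym (R : realType) F (xi : 'cV[R]_5) e G : acBmetric F xi e G ->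
  forall x y, bil G x (F *m y) = bil G y (F *m x).
Proof. by move=> H x y; rewrite -(acgFl H) (acgsym H). Qed.
Lemma acgFF (R : realType) F (xi : 'cV[R]_5) e G : acBmetric F xi e G ->
  forall x y, bil G (F *m x) (F *m y) = - bil G x y + Defs.form e x * Defs.form e y.
Proof. move=> H x y; rewrite (accompat H x y); ring. Qed.
Lemma acgFFr (R : realType) F (xi : 'cV[R]_5) e G : acBmetric F xi e G ->
  forall x y, bil G x (F *m (F *m y)) = - bil G x y + Defs.form e x * Defs.form e y.
Proof.
move=> H x y; rewrite (acFF H) bilDr bilZr (acgxi H) -(scaleN1r y) bilZr; ring.
Qed.
End S.


Lemma mlZ1 (R : realType) (K : tensor4 R) : multilinear4 K ->
  forall a x y z w, K (a *: x) y z w = a * K x y z w.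
Proof.
case=> h _ _ _ a x y z w.
have h0 : K 0 y z w = 0.
  have := h 1 0 0 y z w; rewrite scaler0 addr0 mul1r => h1; lra.
by rewrite -[a *: x]addr0 h h0 addr0.
Qed.
Lemma mlD1 (R : realType) (K : tensor4 R) : multilinear4 K ->
  forall x x' y z w, K (x + x') y z w = K x y z w + K x' y z w.
Proof. case=> h _ _ _ x x' y z w; by rewrite -[x]scale1r h mul1r scale1r. Qed.
Lemma mlZ2 (R : realType) (K : tensor4 R) : multilinear4 K ->
  forall a x y z w, K x (a *: y) z w = a * K x y z w.
Proof.
case=> _ h _ _ a x y z w.
have h0 : K x 0 z w = 0.
  have := h 1 x 0 0 z w; rewrite scaler0 addr0 mul1r => h1; lra.
by rewrite -[a *: y]addr0 h h0 addr0.
Qed.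
Lemma mlD2 (R : realType) (K : tensor4 R) : multilinear4 K ->
  forall x y y' z w, K x (y + y') z w = K x y z w + K x y' z w.
Proof. case=> _ h _ _ x y y' z w; by rewrite -[y]scale1r h mul1r scale1r. Qed.
Lemma mlZ3 (R : realType) (K : tensor4 R) : multilinear4 K ->
  forall a x y z w, K x y (a *: z) w = a * K x y z w.
Proof.
case=> _ _ h _ a x y z w.
have h0 : K x y 0 w = 0.
  have := h 1 x y 0 0 w; rewrite scaler0 addr0 mul1r => h1; lra.
by rewrite -[a *: z]addr0 h h0 addr0.
Qed.
Lemma mlD3 (R : realType) (K : tensor4 R) : multilinear4 K ->
  forall x y z z' w, K x y (z + z') w = K x y z w + K x y z' w.
Proof. case=> _ _ h _ x y z z' w; by rewrite -[z]scale1r h mul1r scale1r. Qed.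
Lemma mlZ4 (R : realType) (K : tensor4 R) : multilinear4 K ->
  forall a x y z w, K x y z (a *: w) = a * K x y z w.
Proof.
case=> _ _ _ h a x y z w.
have h0 : K x y z 0 = 0.
  have := h 1 x y z 0 0; rewrite scaler0 addr0 mul1r => h1; lra.
by rewrite -[a *: w]addr0 h h0 addr0.
Qed.
Lemma mlD4 (R : realType) (K : tensor4 R) : multilinear4 K ->
  forall x y z w w', K x y z (w + w') = K x y z w + K x y z w'.
Proof. case=> _ _ _ h x y z w w'; by rewrite -[w]scale1r h mul1r scale1r. Qed.

Lemma pairsym (R : realType) (K : tensor4 R) : curvature_like K ->
  forall x y z w, K x y z w = K z w x y.
Proof.
case=> a1 a2 b x y z w.
have := b x y z w; have := b y z w x; have := b z w x y; have := b w x y z.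
move: (a1 y z x w) (a1 z x y w) (a1 y z w x) (a1 z w y x) (a1 w y z x).
move: (a1 w x z y) (a1 x z w y) (a1 w x y z) (a1 x y w z) (a1 y w x z).
move: (a2 y z x w) (a2 z x y w) (a2 y z w x) (a2 z w y x) (a2 w y z x).
move: (a2 w x z y) (a2 x z w y) (a2 w x y z) (a2 x y w z) (a2 y w x z).
move: (a1 z y x w) (a1 x z y w) (a1 x w y z) (a1 x w z y) (a1 y w z x) (a1 w z x y).
move: (a2 x y z w) (a2 z w x y) (a2 y x z w) (a2 w z x y) (a1 x y z w) (a1 z w x y).
lra.
Qed.


Definition goodT (R : realType) (F : 'M[R]_5) (K : tensor4 R) :=
  multilinear4 K /\ phi_Kaehler_type F K.

Lemma Kxi4 (R : realType) F (xi : 'cV[R]_5) e G K :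
  acBmetric F xi e G -> goodT F K -> forall x y z, K x y z xi = 0.
Proof.
move=> H [ml [cl kh]] x y z.
have := kh x y z xi; rewrite (acFxi H) -(scale0r 0) (mlZ4 ml) mul0r; lra.
Qed.
Lemma Kxi3 (R : realType) F (xi : 'cV[R]_5) e G K :
  acBmetric F xi e G -> goodT F K -> forall x y w, K x y xi w = 0.
Proof.
move=> H hK x y w; have := Kxi4 H hK x y w; case: hK => _ [[_ a2 _] _].
rewrite a2; lra.
Qed.
Lemma Kxi1 (R : realType) F (xi : 'cV[R]_5) e G K :
  acBmetric F xi e G -> goodT F K -> forall y z w, K xi y z w = 0.
Proof.
move=> H hK y z w; have := Kxi3 H hK z w y; case: hK => _ [cl _].
by rewrite (pairsym cl).
Qed.
Lemma Kxi2 (R : realType) F (xi : 'cV[R]_5) e G K :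
  acBmetric F xi e G -> goodT F K -> forall x z w, K x xi z w = 0.
Proof.
move=> H hK x z w; have := Kxi4 H hK z w x; case: hK => _ [cl _].
by rewrite (pairsym cl).
Qed.
Lemma Kright (R : realType) F (xi : 'cV[R]_5) e G K :
  acBmetric F xi e G -> goodT F K ->
  forall x y z w, K x y (F *m z) w = K x y z (F *m w).
Proof.
move=> H hK x y z w; have := Kxi3 H hK x y (F *m w).
case: (hK) => ml [cl kh].
have := kh x y (F *m z) w; rewrite (acFF H) (mlD3 ml) (mlZ3 ml) -[- z]scaleN1r (mlZ3 ml).
move=> h1 h2; rewrite h2 mulr0 in h1; lra.
Qed.
Lemma Kleft (R : realType) F (xi : 'cV[R]_5) e G K :
  acBmetric F xi e G -> goodT F K ->
  forall x y z w, K (F *m x) y z w = K x (F *m y) z w.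
Proof.
move=> H hK x y z w; have cl : curvature_like K by case: hK => _ [].
by rewrite (pairsym cl) (Kright H hK) -(pairsym cl).
Qed.
Lemma KleftK (R : realType) F (xi : 'cV[R]_5) e G K :
  acBmetric F xi e G -> goodT F K ->
  forall x y z w, K (F *m x) (F *m y) z w = - K x y z w.
Proof.
move=> H [ml [cl kh]] x y z w.
by rewrite (pairsym cl) kh -(pairsym cl).
Qed.
Lemma KFxx (R : realType) F (xi : 'cV[R]_5) e G K :
  acBmetric F xi e G -> goodT F K ->
  forall x z w, K (F *m x) x z w = 0.
Proof.
move=> H hK x z w; have := Kleft H hK x x z w.
case: hK => _ [[a1 _ _] _]; rewrite a1; lra.
Qed.


Definition spans5 (R : realType) (b1 b2 b3 b4 b5 : 'cV[R]_5) :=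
  forall v, exists a1 a2 a3 a4 a5 : R,
    v = a1 *: b1 + a2 *: b2 + a3 *: b3 + a4 *: b4 + a5 *: b5.

Lemma lemL (R : realType) (b1 b2 b3 b4 b5 : 'cV[R]_5) (f : 'cV[R]_5 -> R) :
  spans5 b1 b2 b3 b4 b5 ->
  (forall u v, f (u + v) = f u + f v) -> (forall a u, f (a *: u) = a * f u) ->
  f b1 = 0 -> f b2 = 0 -> f b3 = 0 -> f b4 = 0 -> f b5 = 0 ->
  forall v, f v = 0.
Proof.
move=> hs fD fZ h1 h2 h3 h4 h5 v.
have [a1 [a2 [a3 [a4 [a5 ->]]]]] := hs v.
by rewrite !fD !fZ h1 h2 h3 h4 h5 !mulr0 !addr0.
Qed.

Lemma lemA (R : realType) F (xi : 'cV[R]_5) e G (B : 'cV[R]_5 -> 'cV[R]_5 -> R) x y :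
  acBmetric F xi e G ->
  spans5 x (F *m x) y (F *m y) xi ->
  (forall u u' v, B (u + u') v = B u v + B u' v) ->
  (forall a u v, B (a *: u) v = a * B u v) ->
  (forall u v v', B u (v + v') = B u v + B u v') ->
  (forall a u v, B u (a *: v) = a * B u v) ->
  (forall u v, B u v = - B v u) ->
  (forall u v, B (F *m u) v = B u (F *m v)) ->
  (forall v, B xi v = 0) ->
  B x y = 0 -> B x (F *m y) = 0 ->
  forall u v, B u v = 0.
Proof.
move=> H hs Dl Zl Dr Zr asy Fl xl h1 h2.
have xr : forall u, B u xi = 0 by move=> u; rewrite asy xl oppr0.
have diag : forall u, B u u = 0 by move=> u; have := asy u u; lra.
have hFd : forall u, B u (F *m u) = 0.
  by move=> u; have := Fl u u; rewrite asy; lra.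
have h3 : B (F *m x) (F *m y) = 0.
  rewrite Fl (acFF H) Dr Zr xr -scaleN1r Zr h1; lra.
have h4 : B (F *m x) y = 0 by rewrite Fl.
have rowz : forall b, B b x = 0 -> B b (F *m x) = 0 -> B b y = 0 ->
    B b (F *m y) = 0 -> forall v, B b v = 0.
  move=> b q1 q2 q3 q4; exact: (lemL (f := B b) hs (Dr b) (fun a => Zr a b)).
move=> u v; move: u.
apply: (lemL (f := fun u => B u v) hs (fun u u' => Dl u u' v) (fun a u => Zl a u v)).
- by apply: rowz; rewrite ?diag ?hFd.
- apply: rowz; rewrite ?diag ?h3 ?h4 //.
  by rewrite asy hFd oppr0.
- by apply: rowz; rewrite ?diag ?hFd // asy ?h1 ?h4 oppr0.
- apply: rowz; rewrite ?diag //.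
  + by rewrite asy h2 oppr0.
  + by rewrite asy h3 oppr0.
  + by rewrite asy hFd oppr0.
- exact: xl.
Qed.


Lemma lemZ (R : realType) F (xi : 'cV[R]_5) e G (T : tensor4 R) x y :
  acBmetric F xi e G -> goodT F T ->
  spans5 x (F *m x) y (F *m y) xi ->
  T x y y x = 0 -> T x y y (F *m x) = 0 ->
  forall a b c d, T a b c d = 0.
Proof.
move=> H hT hs h1 h2.
have [ml [[a1 a2 bi] kh]] := hT.
have cl : curvature_like T by case: hT => _ [].
have s1 : forall z w, T x y z w = 0.
  apply: (lemA (B := T x y) H hs).
  - by move=> *; rewrite (mlD3 ml). - by move=> *; rewrite (mlZ3 ml). - by move=> *; rewrite (mlD4 ml). - by move=> *; rewrite (mlZ4 ml).
  - by move=> *; rewrite a2.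
  - by move=> *; rewrite (Kright H hT).
  - by move=> *; rewrite (Kxi3 H hT).
  - by rewrite a2 h1 oppr0.
  - by rewrite a2 (Kright H hT) h2 oppr0.
have s2 : forall z w, T x (F *m y) z w = 0.
  apply: (lemA (B := T x (F *m y)) H hs).
  - by move=> *; rewrite (mlD3 ml). - by move=> *; rewrite (mlZ3 ml). - by move=> *; rewrite (mlD4 ml). - by move=> *; rewrite (mlZ4 ml).
  - by move=> *; rewrite a2.
  - by move=> *; rewrite (Kright H hT).
  - by move=> *; rewrite (Kxi3 H hT).
  - by rewrite (pairsym cl) s1.
  - rewrite -(Kright H hT).
    have := bi x (F *m y) (F *m x) y.
    rewrite (KleftK H hT) (KFxx H hT) (a1 y x) s1; lra.
move=> a b c d; move: a b.
apply: (lemA (B := fun a b => T a b c d) H hs).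
- by move=> *; rewrite (mlD1 ml). - by move=> *; rewrite (mlZ1 ml).
- by move=> *; rewrite (mlD2 ml). - by move=> *; rewrite (mlZ2 ml).
- by move=> *; rewrite a1.
- by move=> *; rewrite (Kleft H hT).
- by move=> *; rewrite (Kxi1 H hT).
- exact: s1.
- exact: s2.
Qed.


Ltac mlsimp := rewrite ?mulmxDr -?scalemxAr ?bilDl ?bilDr ?bilZl ?bilZr ?etaD ?etaZ.

Lemma goodL1 (R : realType) F (xi : 'cV[R]_5) e G :
  acBmetric F xi e G -> goodT F (L1 F e G).
Proof.
move=> H; split; [split|split; [split|]].
- by move=> *; rewrite /L1 /pi1 /pi2 /pi4; mlsimp; ring.
- by move=> *; rewrite /L1 /pi1 /pi2 /pi4; mlsimp; ring.
- by move=> *; rewrite /L1 /pi1 /pi2 /pi4; mlsimp; ring.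
- by move=> *; rewrite /L1 /pi1 /pi2 /pi4; mlsimp; ring.
- by move=> *; rewrite /L1 /pi1 /pi2 /pi4; ring.
- by move=> *; rewrite /L1 /pi1 /pi2 /pi4; ring.
- move=> x y z w; rewrite /L1 /pi1 /pi2 /pi4.
  rewrite (acgsym H z x) (acgsym H y x) (acgsym H z y).
  rewrite (acgFsym H z x) (acgFsym H y x) (acgFsym H z y); ring.
- move=> x y z w; rewrite /L1 /pi1 /pi2 /pi4 !(acgFFr H) !(acetaF H); ring.
Qed.

Lemma goodL2 (R : realType) F (xi : 'cV[R]_5) e G :
  acBmetric F xi e G -> goodT F (L2 F e G).
Proof.
move=> H; split; [split|split; [split|]].
- by move=> *; rewrite /L2 /pi3 /pi5; mlsimp; ring.
- by move=> *; rewrite /L2 /pi3 /pi5; mlsimp; ring.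
- by move=> *; rewrite /L2 /pi3 /pi5; mlsimp; ring.
- by move=> *; rewrite /L2 /pi3 /pi5; mlsimp; ring.
- by move=> *; rewrite /L2 /pi3 /pi5; ring.
- by move=> *; rewrite /L2 /pi3 /pi5; ring.
- move=> x y z w; rewrite /L2 /pi3 /pi5.
  rewrite (acgsym H z x) (acgsym H y x) (acgsym H z y).
  rewrite (acgFsym H z x) (acgFsym H y x) (acgFsym H z y); ring.
- move=> x y z w; rewrite /L2 /pi3 /pi5 !(acgFFr H) !(acetaF H); ring.
Qed.



Lemma goodComb (R : realType) F (K L L' : tensor4 R) a b :
  goodT F K -> goodT F L -> goodT F L' ->
  goodT F (fun x y z w => K x y z w - a * L x y z w - b * L' x y z w).
Proof.
move=> [[k1 k2 k3 k4] [[k5 k6 k7] k8]] [[l1 l2 l3 l4] [[l5 l6 l7] l8]]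
  [[m1 m2 m3 m4] [[m5 m6 m7] m8]].
split; [split|split; [split|]].
- by move=> *; rewrite k1 l1 m1; ring.
- by move=> *; rewrite k2 l2 m2; ring.
- by move=> *; rewrite k3 l3 m3; ring.
- by move=> *; rewrite k4 l4 m4; ring.
- by move=> *; rewrite k5 l5 m5; ring.
- by move=> *; rewrite k6 l6 m6; ring.
- move=> x y z w.
  have := k7 x y z w; have := l7 x y z w; have := m7 x y z w.
  move=> h1 h2 h3.
  have -> : K x y z w - a * L x y z w - b * L' x y z w +
    (K y z x w - a * L y z x w - b * L' y z x w) +
    (K z x y w - a * L z x y w - b * L' z x y w) =
    (K x y z w + K y z x w + K z x y w) - a * (L x y z w + L y z x w + L z x y w)
    - b * (L' x y z w + L' y z x w + L' z x y w) by ring.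
  by rewrite h1 h2 h3; ring.
- by move=> *; rewrite k8 l8 m8; ring.
Qed.


Lemma secL (R : realType) F (xi : 'cV[R]_5) e G x y :
  acBmetric F xi e G ->
  Defs.form e x = 0 -> Defs.form e y = 0 ->
  bil G x (F *m x) = 0 -> bil G y (F *m y) = 0 -> bil G x (F *m y) = 0 ->
  [/\ L1 F e G x y y x = pi1 G x y y x, L2 F e G x y y x = 0,
      L1 F e G x y y (F *m x) = 0 & L2 F e G x y y (F *m x) = pi1 G x y y x].
Proof.
move=> H ex ey hx hy hxy.
have hyx : bil G y (F *m x) = 0 by rewrite (acgFsym H) hxy.
split; rewrite /L1 /L2 /pi1 /pi2 /pi3 /pi4 /pi5 ?(acgFFr H) ?(acetaF H)
  ?ex ?ey ?hx ?hy ?hxy ?hyx; ring.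
Qed.

Lemma spanlem (R : realType) F (xi : 'cV[R]_5) e G x y :
  acBmetric F xi e G ->
  Defs.form e x = 0 -> Defs.form e y = 0 ->
  bil G x (F *m x) = 0 -> bil G y (F *m y) = 0 -> bil G x (F *m y) = 0 ->
  bil G x y = 0 -> bil G x x != 0 -> bil G y y != 0 ->
  spans5 x (F *m x) y (F *m y) xi.
Proof.
move=> H ex ey hx hy hxy gxy nx ny.
have hyx : bil G y (F *m x) = 0 by rewrite (acgFsym H) hxy.
have s := acgsym H.
have t1 : bil G (F *m x) y = 0 by rewrite (acgFl H).
have t2 : bil G (F *m x) (F *m y) = 0 by rewrite (acgFF H) gxy ex; ring.
have t3 : bil G (F *m x) xi = 0 by rewrite (acgxi H) (acetaF H).
have t4 : bil G x xi = 0 by rewrite (acgxi H).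
have t5 : bil G y xi = 0 by rewrite (acgxi H).
have t6 : bil G (F *m y) xi = 0 by rewrite (acgxi H) (acetaF H).
have d2 : bil G (F *m x) (F *m x) = - bil G x x by rewrite (acgFF H) ex; ring.
have d4 : bil G (F *m y) (F *m y) = - bil G y y by rewrite (acgFF H) ey; ring.
have d5 : bil G xi xi = 1 by rewrite (acgxi H) (acetaxi H).
pose X := [tuple x; F *m x; y; F *m y; xi].
have fX : free X.
  apply/freeP => k; rewrite !big_ord_recl big_ord0 /= addr0.
  set k0 := k ord0; set k1 := k (lift _ _); set k2 := k (lift _ (lift _ _)).
  set k3 := k (lift _ (lift _ (lift _ _))).
  set k4 := k (lift _ (lift _ (lift _ (lift _ _)))).
  move=> hs.
  have eq := fun b => congr1 (fun v => bil G v b) hs.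
  have := eq x; have := eq (F *m x); have := eq y; have := eq (F *m y); have := eq xi.
  rewrite /= !bilDl !bilZl !bil0l.
  rewrite (s xi x) (s xi (F *m x)) (s xi y) (s xi (F *m y)) (s (F *m y) x)
    (s (F *m y) (F *m x)) (s (F *m y) y) (s y x) (s y (F *m x)) (s (F *m x) x).
  rewrite ?t1 ?t2 ?t3 ?t4 ?t5 ?t6 ?d2 ?d4 ?d5 ?hx ?hxy ?gxy ?hy ?hyx.
  move=> e5 e4 e3 e2 e1.
  have z0 : k0 = 0.
    apply/eqP; move: e1; rewrite !mulr0 !addr0 => /eqP.
    by rewrite mulf_eq0 (negbTE nx) orbF.
  have z1 : k1 = 0.
    apply/eqP; move: e2; rewrite !mulr0 !add0r !addr0 => /eqP.
    by rewrite mulf_eq0 oppr_eq0 (negbTE nx) orbF.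
  have z2 : k2 = 0.
    apply/eqP; move: e3; rewrite !mulr0 !add0r !addr0 => /eqP.
    by rewrite mulf_eq0 (negbTE ny) orbF.
  have z3 : k3 = 0.
    apply/eqP; move: e4; rewrite !mulr0 !add0r !addr0 => /eqP.
    by rewrite mulf_eq0 oppr_eq0 (negbTE ny) orbF.
  have z4 : k4 = 0.
    by move: e5; rewrite !mulr0 !add0r mulr1.
  case=> [[|[|[|[|[|m]]]]] hm] //.
  - by rewrite -z0; congr k; apply/val_inj.
  - by rewrite -z1; congr k; apply/val_inj.
  - by rewrite -z2; congr k; apply/val_inj.
  - by rewrite -z3; congr k; apply/val_inj.
  - by rewrite -z4; congr k; apply/val_inj.
have bX : basis_of fullv X.
  by rewrite basisEfree fX subvf dimvf.
move=> v.
have hv : v \in <<X>>%VS by rewrite (span_basis bX) memvf.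
have := coord_span hv; rewrite !big_ord_recl big_ord0 /= addr0 !addrA => ->.
by do 5 eexists.
Qed.


Lemma acGunit (R : realType) F (xi : 'cV[R]_5) e G :
  acBmetric F xi e G -> G \in unitmx.
Proof.
case=> _ [_ [P _ hP] _].
have : P^T *m G *m P \in unitmx.
  rewrite hP unitmxE det_diag !big_ord_recl big_ord0 !mxE /=.
  by rewrite !mulN1r !mul1r opprK unitr1.
by rewrite !unitmx_mul => /andP [/andP [_ ->]].
Qed.

Lemma acND (R : realType) F (xi : 'cV[R]_5) e G :
  acBmetric F xi e G -> forall u, (forall v, bil G u v = 0) -> u = 0.
Proof.
move=> H u hu.
have hr : u^T *m G = 0.
  apply/matrixP => i j; rewrite (ord1 i).
  have := hu (delta_mx j 0); rewrite /bil -colE => h.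
  transitivity (col j (u^T *m G) 0 0); first by rewrite [RHS]mxE.
  by rewrite h mxE.
have : u^T = 0.
  by rewrite -(mulmxK (acGunit H) u^T) hr mul0mx.
by move/eqP; rewrite trmx_eq0 => /eqP.
Qed.

Lemma acP1 (R : realType) F (xi : 'cV[R]_5) e G :
  acBmetric F xi e G -> exists p, bil G p p = -1.
Proof.
case=> _ [_ [P _ hP] _]; exists (col 0 P).
rewrite /bil tr_col -row_mul colE mulmxA -colE -row_mul hP !mxE /=.
by rewrite mulr1n.
Qed.


Lemma rotlem (R : realType) F (xi : 'cV[R]_5) e G u :
  acBmetric F xi e G -> Defs.form e u = 0 -> bil G u u != 0 ->
  exists b : R, bil G (u + b *: (F *m u)) (u + b *: (F *m u)) != 0 /\
    bil G (u + b *: (F *m u)) (F *m (u + b *: (F *m u))) = 0.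
Proof.
move=> H eu nu.
set h := bil G u u; set k := bil G u (F *m u).
have E : forall b, bil G (u + b *: (F *m u)) (u + b *: (F *m u)) =
   h + 2 * b * k - b ^+ 2 * h.
  move=> b; rewrite !bilDl !bilDr !bilZl !bilZr ?(acgFF H) ?(acgFl H) eu -/h -/k.
  ring.
have E2 : forall b, bil G (u + b *: (F *m u)) (F *m (u + b *: (F *m u))) =
   k - 2 * b * h - b ^+ 2 * k.
  move=> b; rewrite mulmxDr -scalemxAr !bilDl !bilDr !bilZl !bilZr
    !(acgFFr H) ?(acgFF H) ?(acgFl H) ?(acetaF H) eu -/h -/k.
  ring.
have key : forall b, k - 2 * b * h - b ^+ 2 * k = 0 ->
    h + 2 * b * k - b ^+ 2 * h != 0.
  move=> b h2; apply/eqP => h1.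
  have id : (h + 2 * b * k - b ^+ 2 * h) ^+ 2 + (k - 2 * b * h - b ^+ 2 * k) ^+ 2
     = (h ^+ 2 + k ^+ 2) * (1 + b ^+ 2) ^+ 2 by ring.
  rewrite h1 h2 expr0n /= addr0 in id.
  have hp : 0 < h ^+ 2 by rewrite exprn_even_gt0 //.
  have bp : 0 < (1 + b ^+ 2) ^+ 2.
    by rewrite exprn_even_gt0 //; apply/negP => /eqP hb; have := sqr_ge0 b; lra.
  have kp : 0 <= k ^+ 2 := sqr_ge0 k.
  have : 0 < (h ^+ 2 + k ^+ 2) * (1 + b ^+ 2) ^+ 2.
    by apply: mulr_gt0 => //; lra.
  by rewrite -id ltxx.
have [k0|kn0] := eqVneq k 0.
  exists 0; rewrite E2 E; split.
  - by apply: key; rewrite k0; ring.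
  - by rewrite k0; ring.
pose r := Num.sqrt (h ^+ 2 + k ^+ 2).
have hr : r ^+ 2 = h ^+ 2 + k ^+ 2.
  by rewrite sqr_sqrtr // addr_ge0 // sqr_ge0.
pose b := (r - h) / k.
have kb : k * b = r - h by rewrite /b mulrC divfK.
have e2 : k - 2 * b * h - b ^+ 2 * k = 0.
  apply/eqP; rewrite -(mulrI_eq0 _ (lregP kn0)); apply/eqP.
  have -> : k * (k - 2 * b * h - b ^+ 2 * k) = k ^+ 2 - 2 * h * (k * b) - (k * b) ^+ 2
    by ring.
  rewrite kb.
  have -> : k ^+ 2 - 2 * h * (r - h) - (r - h) ^+ 2 = h ^+ 2 + k ^+ 2 - r ^+ 2 by ring.
  by rewrite hr subrr.
exists b; rewrite E E2; split => //; exact: key.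
Qed.


Lemma kerlem (R : realType) (G : 'M[R]_5) (a b c : 'cV[R]_5) :
  exists w, [/\ w != 0, bil G a w = 0, bil G b w = 0 & bil G c w = 0].
Proof.
pose A := col_mx (a^T *m G) (col_mx (b^T *m G) (c^T *m G)).
pose K0 := kermx A^T.
have rk : (0 < \rank K0)%N.
  rewrite mxrank_ker mxrank_tr; have := rank_leq_row A; lia.
have : K0 != 0 by rewrite -mxrank_eq0 -lt0n.
case: (boolP [exists i, row i K0 != 0]) => [/existsP [i hi] _|/existsPn hn].
  pose r := row i K0.
  have hrA : r *m A^T = 0 by rewrite /r -row_mul mulmx_ker row0.
  have hAw : A *m r^T = 0 by rewrite -[A]trmxK -trmx_mul hrA trmx0.
  move: hAw; rewrite mul_col_mx mul_col_mx => /eqP.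
  rewrite !col_mx_eq0 => /and3P [/eqP ha /eqP hb /eqP hc].
  exists r^T; split.
  - by rewrite trmx_eq0.
  - by rewrite /bil ha mxE.
  - by rewrite /bil hb mxE.
  - by rewrite /bil hc mxE.
move=> /negP []; apply/eqP/row_matrixP => i; rewrite row0.
by apply/eqP; have := hn i; rewrite negbK.
Qed.


Lemma qlem (R : realType) F (xi : 'cV[R]_5) e G p :
  acBmetric F xi e G -> Defs.form e p = 0 -> bil G p p != 0 ->
  bil G p (F *m p) = 0 ->
  exists q0, [/\ bil G q0 p = 0, bil G q0 (F *m p) = 0, bil G q0 xi = 0
     & bil G q0 q0 != 0].
Proof.
move=> H ep np hpF.
have s := acgsym H.
have [w1 [nw hw1 hw2 hw3]] := kerlem G p (F *m p) xi.
rewrite s in hw1; rewrite s in hw2; rewrite s in hw3.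
have [nww|ww0] := boolP (bil G w1 w1 != 0).
  by exists w1; split.
have [v hv] : exists v, bil G w1 v != 0.
  apply: NNPP => hn; move/eqP: nw; apply; apply: (acND H) => v.
  apply/eqP/negP => hv; apply: hn; exists v; exact/negP.
have nFp : bil G (F *m p) (F *m p) != 0.
  by rewrite (acgFF H) ep mulr0 addr0 oppr_eq0.
pose v' := v + (- (bil G v p / bil G p p)) *: p
  + (- (bil G v (F *m p) / bil G (F *m p) (F *m p))) *: (F *m p)
  + (- Defs.form e v) *: xi.
have gFpp : bil G (F *m p) p = 0 by rewrite (acgFl H).
have gxp : bil G xi p = 0 by rewrite s (acgxi H).
have gxFp : bil G xi (F *m p) = 0 by rewrite s (acgxi H) (acetaF H).
have gpx : bil G p xi = 0 by rewrite (acgxi H).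
have gFpx : bil G (F *m p) xi = 0 by rewrite (acgxi H) (acetaF H).
have gxx : bil G xi xi = 1 by rewrite (acgxi H) (acetaxi H).
have v1 : bil G v' p = 0.
  by rewrite /v' !bilDl !bilZl gFpp gxp !mulr0 !addr0 mulNr divfK // subrr.
have v2 : bil G v' (F *m p) = 0.
  by rewrite /v' !bilDl !bilZl hpF gxFp !mulr0 !addr0 mulNr divfK // subrr.
have v3 : bil G v' xi = 0.
  by rewrite /v' !bilDl !bilZl gpx gFpx gxx (acgxi H); ring.
have wv : bil G w1 v' = bil G w1 v.
  rewrite /v' !bilDr !bilZr hw1 hw2 hw3; ring.
clearbody v'.
have [nvv|vv0] := boolP (bil G v' v' != 0).
  by exists v'; split.
exists (w1 + v'); split.
- by rewrite bilDl hw1 v1 addr0.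
- by rewrite bilDl hw2 v2 addr0.
- by rewrite bilDl hw3 v3 addr0.
- rewrite !bilDl !bilDr (eqP (negbNE ww0)) (eqP (negbNE vv0)) (s v' w1) wv.
  by rewrite add0r addr0 -mulr2n mulrn_eq0 negb_or /= hv.
Qed.


Lemma buildpq (R : realType) F (xi : 'cV[R]_5) e G :
  acBmetric F xi e G ->
  exists p q, [/\ Defs.form e p = 0, Defs.form e q = 0, bil G p (F *m p) = 0,
    bil G q (F *m q) = 0 &
    [/\ bil G p (F *m q) = 0, bil G p q = 0, bil G p p != 0 & bil G q q != 0]].
Proof.
move=> H.
have s := acgsym H.
have [p1 hp1] := acP1 H.
pose p0 := p1 + (- Defs.form e p1) *: xi.
have ep0 : Defs.form e p0 = 0.
  by rewrite /p0 etaD etaZ (acetaxi H) mulr1 addrN.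
have np0 : bil G p0 p0 != 0.
  rewrite /p0 !bilDl !bilDr !bilZl !bilZr hp1 (s xi p1) !(acgxi H) (acetaxi H).
  apply/eqP => h; have := sqr_ge0 (Defs.form e p1); rewrite expr2; lra.
have [b [nb hb]] := rotlem H ep0 np0.
set p := p0 + b *: (F *m p0) in nb hb.
have ep : Defs.form e p = 0 by rewrite /p etaD etaZ (acetaF H) ep0; ring.
have [q0 [q1 q2 q3 nq0]] := qlem H ep nb hb.
have eq0 : Defs.form e q0 = 0 by rewrite -(acgxi H).
have [c [nc hc]] := rotlem H eq0 nq0.
set q := q0 + c *: (F *m q0) in nc hc.
have eq : Defs.form e q = 0 by rewrite /q etaD etaZ (acetaF H) eq0; ring.
exists p, q; split => //; split => //.
- rewrite (acgFsym H) /q bilDl bilZl (acgFF H) q2 q1 eq0 ep; ring.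
- rewrite s /q bilDl bilZl (acgFl H) q1 q2; ring.
Qed.


Lemma planepi1 (R : realType) F (xi : 'cV[R]_5) e G (a : {vspace 'cV[R]_5}) x y :
  acBmetric F xi e G -> nondegenerate_plane G a -> basis_of a [:: x; y] ->
  pi1 G x y y x != 0.
Proof.
move=> H nd bX.
have s := acgsym H.
have xa : x \in a by apply: (basis_mem bX); rewrite inE eqxx.
have ya : y \in a by apply: (basis_mem bX); rewrite !inE eqxx orbT.
have hsp : forall v, v \in a -> exists c1 c2, v = c1 *: x + c2 *: y.
  move=> v; rewrite -(span_basis bX) span_cons span_seq1.
  by case/memv_addP => u /vlineP [c1 ->] [w /vlineP [c2 ->] ->]; exists c1, c2.
have orth : forall u, u \in a -> bil G u x = 0 -> bil G u y = 0 -> u = 0.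
  move=> u ua h1 h2; apply: nd => // v /hsp [c1 [c2 ->]].
  by rewrite bilDr !bilZr h1 h2; ring.
have := basis_free bX; rewrite free_cons span_seq1 seq1_free => /andP [xny ynz].
rewrite /pi1; apply/eqP => hdet.
pose u := bil G y y *: x + (- bil G x y) *: y.
have ua : u \in a by rewrite /u memvD // memvZ.
have u0 : u = 0.
  apply: orth => //; rewrite /u bilDl !bilZl.
    by rewrite (s y x) in hdet *; nra.
  ring.
have [gyy|gyy] := eqVneq (bil G y y) 0.
  have gxy : bil G x y = 0.
    rewrite gyy mul0r sub0r (s y x) in hdet.
    by move/eqP: hdet; rewrite oppr_eq0 mulf_eq0 orbb => /eqP.
  by move/eqP: ynz; apply; apply: orth => //; rewrite (s y x).
move/negP: xny; apply; apply/vlineP; exists (bil G x y / bil G y y).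
have : x = (bil G y y)^-1 *: (bil G y y *: x) by rewrite scalerA mulVf // scale1r.
move: u0; rewrite /u => /eqP; rewrite addr_eq0 => /eqP ->.
by rewrite scaleNr opprK scalerA mulrC.
Qed.


Unset Implicit Arguments.

Theorem corollary3p4 (R : realType) (F : 'M[R]_5) (xi : 'cV[R]_5)
  (e : 'rV[R]_5) (G : 'M[R]_5) (K : tensor4 R) :
  acBmetric F xi e G ->
  multilinear4 K ->
  phi_Kaehler_type F K ->
  exists nu nustar : R,
    (forall x y z w,
        K x y z w = nu * L1 F e G x y z w + nustar * L2 F e G x y z w) /\
    (forall (a : {vspace 'cV[R]_5}) (x y : 'cV[R]_5),
        \dim a = 2%N ->
        nondegenerate_plane G a -> totally_real_plane F G a ->
        orth_xi_plane xi G a ->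
        basis_of a [:: x; y] ->
        sec_k G K x y = nu /\ sec_kstar F G K x y = nustar).
Proof.
move=> H ml hK.
have gK : goodT F K := conj ml hK.
have [p [q [ep eq hp hq [hpq gpq np nq]]]] := buildpq H.
have hs := spanlem H ep eq hp hq hpq gpq np nq.
have [a1 a2 a3 a4] := secL H ep eq hp hq hpq.
have nd : pi1 G p q q p != 0.
  by rewrite /pi1 gpq (acgsym H q p) gpq mulr0 subr0 mulf_neq0.
set d := pi1 G p q q p in a1 a4 nd.
exists (K p q q p / d), (K p q q (F *m p) / d).
have Dz := lemZ H (goodComb (K p q q p / d) (K p q q (F *m p) / d) gK
   (goodL1 H) (goodL2 H)) hs.
have main : forall x y z w,
    K x y z w = K p q q p / d * L1 F e G x y z w +
                K p q q (F *m p) / d * L2 F e G x y z w.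
  have z1 : K p q q p - K p q q p / d * L1 F e G p q q p -
      K p q q (F *m p) / d * L2 F e G p q q p = 0.
    by rewrite a1 a2 divfK // mulr0 subr0 subrr.
  have z2 : K p q q (F *m p) - K p q q p / d * L1 F e G p q q (F *m p) -
      K p q q (F *m p) / d * L2 F e G p q q (F *m p) = 0.
    by rewrite a3 a4 divfK // mulr0 subr0 subrr.
  move=> x y z w; have h := Dz z1 z2 x y z w.
  apply/eqP; rewrite -subr_eq0 -h; apply/eqP; ring.
split=> // a x y _ nda tr ox bX.
have xa : x \in a by apply: (basis_mem bX); rewrite inE eqxx.
have ya : y \in a by apply: (basis_mem bX); rewrite !inE eqxx orbT.
have ex : Defs.form e x = 0 by rewrite -(acgxi H); exact: ox.
have ey : Defs.form e y = 0 by rewrite -(acgxi H); exact: ox.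
have [b1 b2 b3 b4] := secL H ex ey (tr x x xa xa) (tr y y ya ya) (tr x y xa ya).
have npi := planepi1 H nda bX.
rewrite /sec_k /sec_kstar (main x y y x) (main x y y (F *m x)) b1 b2 b3 b4; split.
- by rewrite mulr0 addr0 mulfK.
- by rewrite mulr0 add0r mulfK.
Qed.
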